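(* (i) For every even integer $q\ge 2$ there exists a $q$-solvable directed graph with $3q/2$ vertices and clique number $q/2$. (ii) For every positive integer $q$ divisible by $3$ there exists a $q$-solvable directed graph on $4q$ vertices with clique number $q/3$. (iii) For every positive integer $q$ divisible by $4$ there exists a $q$-solvable directed graph on $10q$ vertices with clique number $q/4$.
   Context: A directed graph $D=(V,E)$ has arcs $E \subseteq \{(u,v)\in V^2 : u \neq v\}$ (bidirectional pairs allowed). $N^-(v)=\{u:(u,v)\in E\}$. For $q\ge2$ let $[q]=\{0,\dots,q-1\}$. A $D$-function over $[q]$ is a map $f=(f_v)_{v\in V}:[q]^V\to[q]^V$ with each $f_v(x)$ depending only on $(x_u)_{u\in N^-(v)}$. $D$ is $q$-solvable if some $D$-function $f$ over $[q]$ has the property that for every $x\in[q]^V$ there is $v$ with $f_v(x)=x_v$. A clique in a directed graph is a set $S$ of vertices such that $(u,v)$ is an arc for every ordered pair of distinct $u,v\in S$ (i.e. all pairs are joined in both directions); the clique number is the maximum size of a clique. *)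

(* Defs.v *)
From mathcomp Require Import all_boot.
Set Implicit Arguments. Unset Strict Implicit. Unset Printing Implicit Defensive.

(* A directed graph on the vertex set 'I_n is given by an arc relation
   E : rel 'I_n; loops are forbidden (irreflexivity).  Bidirectional pairs
   are allowed. *)
Definition loopless (n : nat) (E : rel 'I_n) : Prop := forall v, ~~ E v v.

Definition in_nbhd (n : nat) (E : rel 'I_n) (v : 'I_n) : {set 'I_n} :=
  [set u | E u v].

Definition is_Dfunction (n q : nat) (E : rel 'I_n)
  (f : 'I_n -> {ffun 'I_n -> 'I_q} -> 'I_q) : Prop :=
  forall (v : 'I_n) (x y : {ffun 'I_n -> 'I_q}),
    (forall u, u \in in_nbhd E v -> x u = y u) -> f v x = f v y.

Definition q_solvable (n q : nat) (E : rel 'I_n) : Prop :=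
  exists f : 'I_n -> {ffun 'I_n -> 'I_q} -> 'I_q,
    is_Dfunction E f /\ forall x : {ffun 'I_n -> 'I_q}, exists v, f v x = x v.

Definition is_clique (n : nat) (E : rel 'I_n) (S : {set 'I_n}) : Prop :=
  forall u v, u \in S -> v \in S -> u != v -> E u v.

Definition clique_number_eq (n : nat) (E : rel 'I_n) (k : nat) : Prop :=
  (exists S : {set 'I_n}, is_clique E S /\ #|S| = k) /\
  (forall S : {set 'I_n}, is_clique E S -> #|S| <= k).

(* Main.v *)
Require Import Defs.
From mathcomp Require Import all_boot zify.
Set Implicit Arguments. Unset Strict Implicit.

Definition sig_ (n k : nat) (x : 'I_n -> nat) (hk a : nat) : nat :=
  \sum_(u : 'I_n | (u < hk) && (u %/ k == a)) x u.

Definition rsum (n k : nat) (x : 'I_n -> nat) (hk : nat) (v : 'I_n) : nat :=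
  \sum_(u : 'I_n | (u < hk) && (u %/ k == v %/ k) && (u != v)) x u.

Definition bE (h' k n : nat) (H : rel 'I_h'.+1) : rel 'I_n :=
  fun u v => [&& u < h'.+1 * k, v < h'.+1 * k, u != v &
     (u %/ k == v %/ k) || H (inord (u %/ k)) (inord (v %/ k))].

Lemma blowup (h' m k n q : nat) (H : rel 'I_h'.+1) :
  0 < m -> 0 < k -> q = m * k -> h'.+1 * k <= n -> loopless H ->
  (forall a b, H a b -> ~~ H b a) -> q_solvable m H ->
  exists E : rel 'I_n, loopless E /\ q_solvable q E /\ clique_number_eq E k.
Proof.
move=> m0 k0 qE hkn lH aH [g [gD gS]].
have q0 : 0 < q by rewrite qE muln_gt0 m0.
set hk := h'.+1 * k.
exists (@bE h' k n H); split; [|split].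
- by move=> v; rewrite /bE eqxx /= !andbF.
- pose y (x : {ffun 'I_n -> 'I_q}) : {ffun 'I_h'.+1 -> 'I_m} :=
    [ffun b : 'I_h'.+1 => Ordinal (ltn_pmod (sig_ k (fun u => val (x u)) hk (val b)) m0)].
  pose f (v : 'I_n) (x : {ffun 'I_n -> 'I_q}) : 'I_q :=
    if v < hk then
      Ordinal (ltn_pmod (g (inord (v %/ k)) (y x) + m * (v %% k)
                 + q.-1 * rsum k (fun u => val (x u)) hk v) q0)
    else Ordinal q0.
  exists f; split.
  + move=> v x x' hx; rewrite /f; case: ifP => // vlt.
    apply: val_inj => /=.
    have -> : g (inord (v %/ k)) (y x) = g (inord (v %/ k)) (y x').
      apply: gD => b; rewrite inE => Hb.
      rewrite /y !ffunE; apply: val_inj => /=; congr (_ %% _).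
      apply: eq_bigr => u /andP [ult /eqP ub]; congr val; apply: hx.
      rewrite inE /bE ult vlt /=.
      have bv : b != inord (v %/ k).
        by apply/eqP => bE'; move: (lH b); rewrite {2}bE' Hb.
      rewrite ub inord_val Hb orbT andbT.
      apply/eqP => uv; move: bv; rewrite -uv ub inord_val eqxx //.
    congr (_ %% _); congr (_ + _ * _).
    apply: eq_bigr => u /andP [/andP [ult ub] uv]; congr val; apply: hx.
    by rewrite inE /bE ult vlt uv ub.
  + move=> x.
    have [a ga] := gS (y x).
    set s := sig_ k (fun u => val (x u)) hk a.
    have t0lt : (s %% q) %/ m < k by rewrite ltn_divLR // mulnC -qE ltn_pmod.
    have vlt : a * k + (s %% q) %/ m < n.
      apply: leq_trans hkn; rewrite /hk.
      apply: (@leq_trans (a * k + k)); first by rewrite ltn_add2l.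
      by rewrite -mulSnr leq_mul2r ltn_ord orbT.
    pose v := Ordinal vlt.
    have vdiv : v %/ k = a by rewrite /= divnMDl // divn_small // addn0.
    have vmod : v %% k = (s %% q) %/ m by rewrite /= modnMDl modn_small.
    have vhk : v < hk.
      rewrite /hk /= ; apply: (@leq_trans (a * k + k)); first by rewrite ltn_add2l.
      by rewrite -mulSnr leq_mul2r ltn_ord orbT.
    exists v; rewrite /f vhk; apply: val_inj => /=.
    rewrite vdiv inord_val ga /y ffunE /= -/s vmod.
    have sE : s = x v + rsum k (fun u => val (x u)) hk v.
      rewrite /s /sig_ (bigD1 v) /=; last by rewrite vhk vdiv eqxx.
      congr (_ + _); apply: eq_bigl => u; rewrite vdiv.
      by [].
    have dm : m %| q by rewrite qE dvdn_mulr.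
    have e1 : s %% m + m * ((s %% q) %/ m) = s %% q.
      by rewrite addnC mulnC {2}(divn_eq (s %% q) m) modn_dvdm.
    rewrite e1.
    rewrite modnDml sE.
    set r := rsum _ _ _ _.
    have -> : x v + r + q.-1 * r = x v + r * q.
      by rewrite -addnA; congr (_ + _); rewrite mulnC -{1}(muln1 r) -mulnDr add1n prednK.
    by rewrite addnC modnMDl modn_small.
- have khk : k <= hk by rewrite /hk leq_pmull.
  have kn : k <= n := leq_trans khk hkn.
  split.
  + exists [set widen_ord kn t | t in 'I_k]; split.
    * move=> u v /imsetP [t _ ->] /imsetP [t' _ ->] tt.
      have tk := ltn_ord t; have tk' := ltn_ord t'.
      rewrite /bE /= tt /= !divn_small // eqxx /= andbT.
      by rewrite !(leq_trans _ khk).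
    * rewrite card_in_imset ?card_ord // => a b _ _ /(congr1 val) /= ab.
      exact: val_inj.
  + move=> S cS.
    pose idx (u : 'I_n) : 'I_k := Ordinal (ltn_pmod u k0).
    rewrite -(card_in_imset (f:=idx)).
      by apply: leq_trans (max_card _) _; rewrite card_ord.
    move=> u v uS vS /(congr1 val) /= uvm.
    case: (eqVneq u v) => // uv.
    have e1 := cS u v uS vS uv.
    have e2 := cS v u vS uS; rewrite eq_sym in e2; have {}e2 := e2 uv.
    move: e1 e2; rewrite /bE => /and4P [_ _ _ o1] /and4P [_ _ _ o2].
    case: (eqVneq (u %/ k) (v %/ k)) => [dq|dq].
      by apply/val_inj => /=; rewrite (divn_eq u k) (divn_eq v k) dq uvm.
    rewrite (negbTE dq) /= in o1; rewrite eq_sym (negbTE dq) /= in o2.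
    by move: (aH _ _ o1); rewrite o2.
Qed.

Definition H3 : rel 'I_3 := fun a b => val a == (val b + 2) %% 3.

Lemma H3_loopless : loopless H3.
Proof. move=> a; rewrite /H3; have := ltn_ord a; move: (nat_of_ord a) => n hn.
apply/negP => /eqP; lia. Qed.

Lemma H3_anti a b : H3 a b -> ~~ H3 b a.
Proof. rewrite /H3; have := ltn_ord a; have := ltn_ord b.
move: (nat_of_ord a) (nat_of_ord b) => n m hm hn /eqP e; apply/negP => /eqP e'; lia.
Qed.

Lemma T_solvable : q_solvable 2 H3.
Proof.
exists (fun b (y : {ffun 'I_3 -> 'I_2}) => y (inord ((b + 2) %% 3))); split.
- move=> b y y' hy; by apply: hy; rewrite inE /H3 /= inordK // ltn_pmod.
- move=> y.
  case: (pickP (fun b : 'I_3 => y (inord ((b + 2) %% 3)) == y b)) => [b /eqP hb|hn]; first by exists b.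
  exfalso.
  have h0 := hn (inord 0); have h1 := hn (inord 1); have h2 := hn (inord 2).
  rewrite /= inordK // -val_eqE /= in h0.
  rewrite /= inordK // -val_eqE /= in h1.
  rewrite /= inordK // -val_eqE /= in h2.
  have := ltn_ord (y (inord 0)); have := ltn_ord (y (inord 1)); have := ltn_ord (y (inord 2)).
  move: h0 h1 h2; rewrite (_ : (0 + 2) %% 3 = 2) // (_ : (1 + 2) %% 3 = 0) // (_ : (2 + 2) %% 3 = 1) //.
  move: (nat_of_ord (y (inord 0))) (nat_of_ord (y (inord 1))) (nat_of_ord (y (inord 2))) => a b c.
  lia.
Qed.

Lemma solv_mono (h : nat) (H : rel 'I_h) m m' : 0 < m -> m <= m' -> q_solvable m' H -> q_solvable m H.
Proof.
move=> m0 mm [g [gD gS]].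
pose lift (y : {ffun 'I_h -> 'I_m}) : {ffun 'I_h -> 'I_m'} := [ffun b => widen_ord mm (y b)].
exists (fun a y => insubd (Ordinal m0) (val (g a (lift y)))); split.
- move=> a y y' hy; congr insubd; congr val; apply: gD => u hu.
  by rewrite !ffunE hy.
- move=> y; have [a ha] := gS (lift y); exists a.
  rewrite ha ffunE /=; apply: val_inj; rewrite val_insubd /= ltn_ord //.
Qed.

Lemma copy_lemma (c : bool) a0 a1 a2 : a0 < 4 -> a1 < 4 -> a2 < 4 ->
  a0 != (a2 + 2 * c) %% 4 -> a1 != (a0 + 2 * c) %% 4 -> a2 != (a1 + 2 * c) %% 4 ->
  [&& a0 != a2, a1 != a0 & a2 != a1] = ~~ c.
Proof.
move=> h0 h1 h2; case: c => /=;
  case: (eqVneq a0 a2) => /= e0; case: (eqVneq a1 a0) => /= e1;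
  case: (eqVneq a2 a1) => //= e2; lia.
Qed.

Definition Y (y : {ffun 'I_9 -> 'I_4}) (n : nat) : nat := val (y (inord n)).
Definition phi (y : {ffun 'I_9 -> 'I_4}) (i : nat) : bool :=
  [&& Y y (3*i) != Y y (3*i+2), Y y (3*i+1) != Y y (3*i) & Y y (3*i+2) != Y y (3*i+1)].

Definition H9 : rel 'I_9 := fun a b =>
  ((a %/ 3 == b %/ 3) && (a %% 3 == (b %% 3 + 2) %% 3)) || (a %/ 3 == (b %/ 3 + 2) %% 3).

Lemma four_pos : 0 < 4. Proof. by []. Qed.

Definition g9 (b : 'I_9) (y : {ffun 'I_9 -> 'I_4}) : 'I_4 :=
  Ordinal (ltn_pmod (Y y (3 * (b %/ 3) + (b %% 3 + 2) %% 3) + 2 * phi y ((b %/ 3 + 2) %% 3)) four_pos).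

Lemma H9_loopless : loopless H9.
Proof. move=> a; rewrite /H9; have := ltn_ord a; move: (nat_of_ord a) => n hn.
apply/negP => /orP [/andP [_ /eqP] | /eqP]; lia. Qed.

Lemma H9_anti a b : H9 a b -> ~~ H9 b a.
Proof. rewrite /H9; have := ltn_ord a; have := ltn_ord b.
move: (nat_of_ord a) (nat_of_ord b) => n m hm hn.
case/orP => [/andP [/eqP e1 /eqP e2]|/eqP e1]; apply/negP => /orP [/andP [/eqP e3 /eqP e4]|/eqP e3]; lia.
Qed.

Lemma phi_copy y i : i < 3 ->
  (forall j, j < 3 -> (Y y (3 * i + (j + 2) %% 3) + 2 * phi y ((i + 2) %% 3)) %% 4 != Y y (3 * i + j)) ->
  phi y i = ~~ phi y ((i + 2) %% 3).
Proof.
move=> hi hj.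
have y4 : forall n, Y y n < 4 by move=> n; rewrite /Y ltn_ord.
have h0 := hj 0 isT; have h1 := hj 1 isT; have h2 := hj 2 isT.
rewrite (_ : (0 + 2) %% 3 = 2) // addn0 in h0.
rewrite (_ : (1 + 2) %% 3 = 0) // addn0 in h1.
rewrite (_ : (2 + 2) %% 3 = 1) // in h2.
rewrite /phi; apply: copy_lemma => //; rewrite eq_sym ?addn0 //.
Qed.

Lemma TT_solvable : q_solvable 4 H9.
Proof.
exists g9; split.
- move=> b y y' hy.
  have hY : forall n, n < 9 ->
      ((n %/ 3 == b %/ 3) && (n %% 3 == (b %% 3 + 2) %% 3)) || (n %/ 3 == (b %/ 3 + 2) %% 3) ->
      Y y n = Y y' n.
    by move=> n hn hb; rewrite /Y hy // inE /H9 inordK.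
  have hb := ltn_ord b.
  have hphi : phi y ((b %/ 3 + 2) %% 3) = phi y' ((b %/ 3 + 2) %% 3).
    rewrite /phi !hY //; lia.
  apply: val_inj => /=; rewrite hphi hY //; lia.
- move=> y.
  case: (pickP (fun b => g9 b y == y b)) => [b /eqP hb|hn]; first by exists b.
  exfalso.
  have hj : forall i, i < 3 -> forall j, j < 3 ->
      (Y y (3 * i + (j + 2) %% 3) + 2 * phi y ((i + 2) %% 3)) %% 4 != Y y (3 * i + j).
    move=> i hi j hj; have := hn (inord (3 * i + j)).
    rewrite /g9 /= -val_eqE /= inordK; last by lia.
    have -> : (3 * i + j) %/ 3 = i by lia.
    have -> : (3 * i + j) %% 3 = j by lia.
    by move=> ->.
  have p0 := phi_copy (isT : 0 < 3) (hj 0 isT).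
  have p1 := phi_copy (isT : 1 < 3) (hj 1 isT).
  have p2 := phi_copy (isT : 2 < 3) (hj 2 isT).
  rewrite (_ : (0 + 2) %% 3 = 2) // in p0.
  rewrite (_ : (1 + 2) %% 3 = 0) // in p1.
  rewrite (_ : (2 + 2) %% 3 = 1) // in p2.
  by move: p0 p1 p2; case: (phi y 0); case: (phi y 1); case: (phi y 2).
Qed.

Theorem theorem7 :
  (forall q : nat, 2 <= q -> ~~ odd q ->
     exists E : rel 'I_(3 * q %/ 2),
       loopless E /\ q_solvable q E /\ clique_number_eq E (q %/ 2)) /\
  (forall q : nat, 0 < q -> 3 %| q ->
     exists E : rel 'I_(4 * q),
       loopless E /\ q_solvable q E /\ clique_number_eq E (q %/ 3)) /\
  (forall q : nat, 0 < q -> 4 %| q ->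
     exists E : rel 'I_(10 * q),
       loopless E /\ q_solvable q E /\ clique_number_eq E (q %/ 4)).
Proof.
split; [|split].
- move=> q q2 qe.
  have d2 : 2 %| q by rewrite dvdn2.
  have qk : q = 2 * (q %/ 2) by rewrite mulnC divnK.
  apply: (@blowup 2 2 (q %/ 2) _ q H3) => //.
  + lia.
  + lia.
  + exact: H3_loopless.
  + exact: H3_anti.
  + exact: T_solvable.
- move=> q q0 d3.
  have qk : q = 3 * (q %/ 3) by rewrite mulnC divnK.
  apply: (@blowup 8 3 (q %/ 3) _ q H9) => //.
  + lia.
  + lia.
  + exact: H9_loopless.
  + exact: H9_anti.
  + exact: (solv_mono (m' := 4)) TT_solvable.
- move=> q q0 d4.
  have qk : q = 4 * (q %/ 4) by rewrite mulnC divnK.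
  apply: (@blowup 8 4 (q %/ 4) _ q H9) => //.
  + lia.
  + lia.
  + exact: H9_loopless.
  + exact: H9_anti.
  + exact: TT_solvable.
Qed.
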